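(* Assume $X$ satisfies condition (P). Then for every $w\in W_c$, $$\sum_{x\in W_c,\ x\le w}\varepsilon_x\varepsilon_w\,a_{x,w}=q^{\ell(w)}.$$
   Context: Let $X$ be a Coxeter graph with Coxeter system $(W,S)$, length function $\ell$, Bruhat order $\le$, identity $e$; write $\varepsilon_w=(-1)^{\ell(w)}$ and $\ell(x,w)=\ell(w)-\ell(x)$. An element of $W$ is fully commutative if any two of its reduced expressions are related by a sequence of moves $ss'\leftrightarrow s's$ with $s,s'\in S$ commuting; $W_c$ denotes the set of fully commutative elements, $[x,w]_c=\{y\in W_c:x\le y\le w\}$ and $(x,w)_c=\{y\in W_c:x<y<w\}$. $\mathcal H$ is the Hecke algebra of $W$ over $\mathcal A=\mathbb Z[q^{1/2},q^{-1/2}]$ with basis $\{T_w\}_{w\in W}$ and multiplication $T_wT_s=T_{ws}$ if $\ell(ws)>\ell(w)$, $T_wT_s=qT_{ws}+(q-1)T_w$ if $\ell(ws)<\ell(w)$. $J$ is the two-sided ideal generated by the elements $\sum_{w\in\langle s,s'\rangle}T_w$ for all pairs of non-commuting $s,s'\in S$ such that $ss'$ has finite order; $TL(X)=\mathcal H/J$, $\sigma:\mathcal H\to TL(X)$ the projection, $t_w=\sigma(T_w)$. $\{t_w:w\in W_c\}$ is an $\mathcal A$-basis of $TL(X)$; for $w\in W$ the polynomials $D_{x,w}\in\mathbb Z[q]$ ($x\in W_c$) are defined by $t_w=\sum_{x\in W_c,\,x\le w}D_{x,w}t_x$, with $D_{x,w}=0$ if $x\not\le w$ (so $D_{x,w}=\delta_{x,w}$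 when $w\in W_c$). Let $\iota$ be the ring involution of $\mathcal H$ with $\iota(q^{1/2})=q^{-1/2}$, $\iota(T_w)=(T_{w^{-1}})^{-1}$; it preserves $J$ and so induces an involution of $TL(X)$. $R_{x,w}$ are the $R$-polynomials, defined by $(T_{w^{-1}})^{-1}=\varepsilon_wq^{-\ell(w)}\sum_{x\le w}\varepsilon_xR_{x,w}T_x$, and $P_{x,w}$ are the Kazhdan–Lusztig polynomials, so that $C'_w=q^{-\ell(w)/2}\sum_{x\le w}P_{x,w}T_x$ is $\iota$-invariant, $P_{w,w}=1$, $\deg P_{x,w}\le(\ell(x,w)-1)/2$ for $x<w$. For $w\in W_c$, the polynomials $a_{y,w}\in\mathbb Z[q]$ ($y\in W_c$) are defined by $\iota(t_w)=(t_{w^{-1}})^{-1}=q^{-\ell(w)}\sum_{y\in W_c,\,y\le w}a_{y,w}t_y$, $a_{y,w}=0$ if $y\not\le w$. Let $p\mapsto\overline p$ be the ring involution of $\mathbb Z[q^{1/2},q^{-1/2}]$ with $q^{1/2}\mapsto q^{-1/2}$. For $w\in W_c$, $\{L_{x,w}\}_{x\in W_c}$ is the unique family in $\mathbb Z[q^{-1/2}]$ with $L_{x,w}=0$ if $x\not\le w$, $L_{w,w}=1$, $L_{x,w}\in q^{-1/2}\mathbb Z[q^{-1/2}]$ if $x<w$, and $L_{x,w}=\sum_{y\in[x,w]_c}q^{(\ell(x)-\ell(y))/2}a_{x,y}\,\overline{L_{y,w}}$; set $c_w=\sum_{x\in W_c,\,x\le w}q^{-\ell(x)/2}L_{x,w}t_x$.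 Condition (P) on $X$: $\sigma(C'_w)=c_w$ for all $w\in W_c$ and $\sigma(C'_w)=0$ for all $w\in W\setminus W_c$. (For finite irreducible or affine $X$, this holds exactly when $X$ has no vertex adjacent to three or more vertices and $X\neq\widetilde F_4$; in particular types $A$, $B$, $F_4$, $H_3$, $H_4$, $I_2(m)$.) *)

(* Defs.v *)
From HB Require Import structures.
From mathcomp Require Import all_boot all_order all_algebra.
From Stdlib Require Import Relations ClassicalEpsilon.
Set Implicit Arguments. Unset Strict Implicit. Unset Printing Implicit Defensive.
Import GRing.Theory.
Local Open Scope ring_scope.

Definition pb (P : Prop) : bool :=
  if excluded_middle_informative P then true else false.

(* Groups given by explicit operations (W may be infinite).            *)
Definition gpow {G : Type} (mul : G -> G -> G) (one : G) (x : G) (n : nat) : G :=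
  iter n (mul x) one.

Definition group_laws {G : Type} (mul : G -> G -> G) (one : G) (inv : G -> G) : Prop :=
  [/\ (forall x y z, mul x (mul y z) = mul (mul x y) z),
      (forall x, mul one x = x), (forall x, mul x one = x),
      (forall x, mul (inv x) x = one) & (forall x, mul x (inv x) = one)].

(* A Coxeter matrix (equivalently a Coxeter graph X) on the finite vertex set S:
   m s s = 1, m symmetric, m s t in {2,3,...} or 0 (= infinity) for s <> t. *)
Definition coxeter_matrix {S : finType} (m : S -> S -> nat) : Prop :=
  [/\ (forall s, m s s = 1%N), (forall s t, m s t = m t s)
    & (forall s t, s != t -> m s t != 1%N)].

Record coxdata (S : finType) := CoxData {
  cW :> eqType;
  cmul : cW -> cW -> cW;
  cone : cW;
  cinv : cW -> cW;
  cgen : S -> cW }.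
Arguments cmul {S} c _ _.
Arguments cone {S} c.
Arguments cinv {S} c _.
Arguments cgen {S} c _.

Section Coxeter.
Variables (S : finType) (X : coxdata S).
Local Notation W := (cW X).
Local Notation "x * y" := (cmul X x y).
Local Notation e := (cone X).
Local Notation gen := (cgen X).

(* (W,S) is a Coxeter system with Coxeter matrix m : W is the group presented by
   generators S and relations (s t)^(m s t) = 1 (for m s t <> 0), expressed by
   the universal property of the presentation. *)
Definition coxeter_system (m : S -> S -> nat) : Prop :=
  [/\ coxeter_matrix m,
      group_laws (cmul X) e (cinv X),
      (forall s t, m s t != 0%N -> gpow (cmul X) e (gen s * gen t) (m s t) = e)
    & (forall (G : Type) (gm : G -> G -> G) (g1 : G) (gi : G -> G),
        group_laws gm g1 gi ->
        forall f : S -> G,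
        (forall s t, m s t != 0%N -> gpow gm g1 (gm (f s) (f t)) (m s t) = g1) ->
        exists phi : W -> G,
          [/\ (forall x y, phi (x * y) = gm (phi x) (phi y)),
              (forall s, phi (gen s) = f s)
            & (forall psi : W -> G, (forall x y, psi (x * y) = gm (psi x) (psi y)) ->
                 (forall s, psi (gen s) = f s) -> forall x, psi x = phi x)])].

Definition wprod (u : seq S) : W := foldr (fun s x => gen s * x) e u.

Definition has_word_of_size (w : W) (n : nat) : bool :=
  [exists u : n.-tuple S, wprod u == w].

Definition len (w : W) : nat :=
  match excluded_middle_informative (exists n, has_word_of_size w n) with
  | left pf => ex_minn pf
  | right _ => 0%N
  end.

Definition reflection (t : W) : Prop := exists w s, t = w * gen s * cinv X w.
Definition bruhat_step (x y : W) : Prop :=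
  exists t, [/\ reflection t, y = x * t & (len x < len y)%N].
Definition bruhat_le (x w : W) : Prop := clos_refl_trans W bruhat_step x w.

(* Fully commutative elements: any two reduced expressions (words of length
   len w with product w) are related by moves s s' <-> s' s, s, s' commuting. *)
Definition comm_move (n : nat) : rel (n.-tuple S) :=
  fun u u' =>
  [exists i : 'I_n, exists j : 'I_n,
     [&& (val j == (val i).+1),
         gen (tnth u i) * gen (tnth u j) == gen (tnth u j) * gen (tnth u i),
         tnth u' i == tnth u j, tnth u' j == tnth u i &
         [forall k : 'I_n, (k != i) && (k != j) ==> (tnth u' k == tnth u k)]]].

Definition fc (w : W) : bool :=
  [forall u : (len w).-tuple S, forall u' : (len w).-tuple S,
     (wprod u == w) ==> (wprod u' == w) ==> connect (@comm_move (len w)) u u'].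

(* A finite list containing every x <= w: products of subwords of a chosen
   reduced expression of w (subword property); we then filter by bruhat_le. *)
Definition subword_products (w : W) : seq W :=
  match [pick u : (len w).-tuple S | wprod u == w] with
  | Some u => undup [seq wprod (mask (val b) u) | b <- enum {: (len w).-tuple bool}]
  | None => [::]
  end.

Definition lower (w : W) : seq W :=
  [seq x <- subword_products w | pb (bruhat_le x w)].
Definition lowerc (w : W) : seq W := [seq x <- lower w | fc x].

(* elements of the dihedral subgroup <s,t>, given a period n > 0 of s t *)
Definition dihedral (s t : S) (n : nat) : seq W :=
  undup (flatten [seq [:: gpow (cmul X) e (gen s * gen t) k;
                          gpow (cmul X) e (gen s * gen t) k * gen s] | k <- iota 0 n]).

End Coxeter.
Arguments coxeter_system {S} X m.
Arguments wprod {S} X u.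
Arguments has_word_of_size {S} X w n.
Arguments len {S} X w.
Arguments reflection {S} X t.
Arguments bruhat_step {S} X x y.
Arguments bruhat_le {S} X x w.
Arguments comm_move {S} X n _ _.
Arguments fc {S} X w.
Arguments subword_products {S} X w.
Arguments lower {S} X w.
Arguments lowerc {S} X w.
Arguments dihedral {S} X s t n.

(* The ring A = Z[q^{1/2}, q^{-1/2}], given by v = q^{1/2} and vinv = q^{-1/2}:
   A is (isomorphic to) the Laurent polynomial ring over Z in v.          *)
Definition zpoly_eval {A : comNzRingType} (p : {poly int}) (x : A) : A :=
  (map_poly (fun z : int => z%:~R) p).[x].

Definition laurent_ring (A : comNzRingType) (v vinv : A) : Prop :=
  [/\ v * vinv = 1,
      (forall a : A, exists (p : {poly int}) (n : nat), a = zpoly_eval p v * vinv ^+ n)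
    & (forall p : {poly int}, zpoly_eval p v = 0 -> p = 0)].

Section Hecke.
Variables (S : finType) (X : coxdata S).
Variables (A : comNzRingType) (v vinv : A).
Local Notation W := (cW X).
Local Notation "x *W y" := (cmul X x y) (at level 40, left associativity).
Local Notation gen := (cgen X).
Local Notation q := (v * v)%R.

Definition hecke_algebra (H : algType A) (T : W -> H) : Prop :=
  [/\ (forall h : H, exists (l : seq W) (c : W -> A), h = \sum_(w <- l) c w *: T w),
      (forall (l : seq W) (c : W -> A), uniq l ->
         \sum_(w <- l) c w *: T w = 0 -> forall w, w \in l -> c w = 0),
      T (cone X) = 1
    & (forall (w : W) (s : S), (T w * T (gen s))%R =
          if (len X w < len X (w *W gen s))%N then T (w *W gen s)
          else q *: T (w *W gen s) + (q - 1) *: T w)].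

(* iota : the ring involution of H with iota(q^{1/2}) = q^{-1/2} (i.e. semilinear
   w.r.t. bar) and iota(T_w) = (T_{w^{-1}})^{-1}. *)
Definition hecke_iota (bar : A -> A) (H : algType A) (T : W -> H) (iota : {rmorphism H -> H}) :
  Prop :=
  [/\ (forall (a : A) (h : H), iota (a *: h) = bar a *: iota h),
      (forall h, iota (iota h) = h)
    & (forall w, (iota (T w) * T (cinv X w))%R = 1 /\ (T (cinv X w) * iota (T w))%R = 1)].

Definition J_generator_ok (s t : S) (n : nat) : Prop :=
  [/\ gen s *W gen t != gen t *W gen s, (0 < n)%N & gpow (cmul X) (cone X) (gen s *W gen t) n = cone X].

Definition J_gen (H : algType A) (T : W -> H) (s t : S) (n : nat) : H :=
  \sum_(x <- dihedral X s t n) T x.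

Definition in_J (H : algType A) (T : W -> H) (h : H) : Prop :=
  exists l : seq (H * (S * S * nat) * H),
    (forall g, g \in l -> J_generator_ok g.1.2.1.1 g.1.2.1.2 g.1.2.2) /\
    h = \sum_(g <- l) (g.1.1 * J_gen T g.1.2.1.1 g.1.2.1.2 g.1.2.2 * g.2)%R.

(* sigma : H -> TL(X) = H / J is the projection *)
Definition TL_projection (H TL : algType A) (T : W -> H) (sigma : {lrmorphism H -> TL}) : Prop :=
  (forall u : TL, exists h, sigma h = u) /\ (forall h, sigma h = 0 <-> in_J T h).

Definition a_coeffs (TL : algType A) (t : W -> TL) (a : W -> W -> {poly int}) : Prop :=
  forall w, fc X w ->
    let r := vinv ^+ (2 * len X w) *: \sum_(y <- lowerc X w) zpoly_eval (a y w) q *: t y in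
    (t (cinv X w) * r)%R = 1 /\ (r * t (cinv X w))%R = 1.

Definition Cprime (H : algType A) (T : W -> H) (P : W -> W -> {poly int}) (w : W) : H :=
  vinv ^+ len X w *: \sum_(x <- lower X w) zpoly_eval (P x w) q *: T x.

Definition KL_polys (H : algType A) (T : W -> H) (iota : H -> H) (P : W -> W -> {poly int}) :
  Prop :=
  forall w,
  [/\ iota (Cprime T P w) = Cprime T P w, P w w = 1
    & forall x, bruhat_le X x w -> x != w ->
        ((size (P x w)).-1 <= (len X w - len X x - 1)./2)%N].

(* L_{x,w} (a polynomial in q^{-1/2}, represented by a polynomial in vinv) *)
Definition L_polys (bar : A -> A) (a L : W -> W -> {poly int}) : Prop :=
  forall w, fc X w ->
  L w w = 1 /\
  forall x, x \in lowerc X w ->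
    (x != w -> (L x w)`_0 = 0) /\
    zpoly_eval (L x w) vinv =
      \sum_(y <- lowerc X w | pb (bruhat_le X x y))
         vinv ^+ (len X y - len X x) * zpoly_eval (a x y) q * bar (zpoly_eval (L y w) vinv).

Definition c_elt (TL : algType A) (t : W -> TL) (L : W -> W -> {poly int}) (w : W) : TL :=
  \sum_(x <- lowerc X w) (vinv ^+ len X x * zpoly_eval (L x w) vinv) *: t x.

Definition condition_P (H TL : algType A) (T : W -> H) (sigma : H -> TL)
  (P L : W -> W -> {poly int}) : Prop :=
  forall w, (fc X w -> sigma (Cprime T P w) = c_elt (fun x => sigma (T x)) L w) /\
            (~~ fc X w -> sigma (Cprime T P w) = 0).

End Hecke.
Arguments hecke_algebra {S} X {A} v {H} T.
Arguments hecke_iota {S} X {A} bar {H} T iota.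
Arguments J_gen {S} X {A H} T s t n.
Arguments in_J {S} X {A H} T h.
Arguments TL_projection {S} X {A H TL} T sigma.
Arguments a_coeffs {S} X {A} v vinv {TL} t a.
Arguments Cprime {S} X {A} v vinv {H} T P w.
Arguments KL_polys {S} X {A} v vinv {H} T iota P.
Arguments L_polys {S} X {A} v vinv bar a L.
Arguments c_elt {S} X {A} vinv {TL} t L w.
Arguments condition_P {S} X {A} v vinv {H TL} T sigma P L.

(* Main.v *)
Require Import Defs.
From HB Require Import structures.
From mathcomp Require Import all_boot all_order all_algebra.
From mathcomp Require Import ring.
From Stdlib Require Import ProofIrrelevance ClassicalEpsilon.
Set Implicit Arguments. Unset Strict Implicit. Unset Printing Implicit Defensive.
Import GRing.Theory.
Local Open Scope ring_scope.

Module Cox.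

Section Cox.
Variables (S : finType) (m : S -> S -> nat) (X : coxdata S) (HX : coxeter_system X m).
Local Notation W := (cW X).
Local Notation mul := (cmul X).
Local Notation e := (cone X).

Lemma gl : group_laws mul e (cinv X).
Proof. by case: HX. Qed.

Lemma mulA x y z : mul x (mul y z) = mul (mul x y) z.
Proof. by case: gl. Qed.
Lemma mul1 x : mul e x = x. Proof. by case: gl. Qed.
Lemma mulr1 x : mul x e = x. Proof. by case: gl. Qed.
Lemma mulVx x : mul (cinv X x) x = e. Proof. by case: gl. Qed.
Lemma mulxV x : mul x (cinv X x) = e. Proof. by case: gl. Qed.

Lemma gen2 s : mul (cgen X s) (cgen X s) = e.
Proof.
case: HX => [[Hm _ _] _ Hrel _].
have := Hrel s s; rewrite Hm /= mulr1; exact.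
Qed.

Lemma wprod_cat u1 u2 : wprod X (u1 ++ u2) = mul (wprod X u1) (wprod X u2).
Proof. by elim: u1 => [|s u IH] /=; [rewrite mul1 | rewrite IH mulA]. Qed.

Lemma wprod_rcons u s : wprod X (rcons u s) = mul (wprod X u) (cgen X s).
Proof. by rewrite -cats1 wprod_cat /= mulr1. Qed.

Lemma wprod_rev u : mul (wprod X u) (wprod X (rev u)) = e.
Proof.
elim: u => [|s u IH] /=; first by rewrite mul1.
rewrite rev_cons wprod_rcons -mulA (mulA (wprod X u)) IH mul1 gen2 //.
Qed.

Lemma inv_uniq x y : mul x y = e -> y = cinv X x.
Proof.
move=> H; rewrite -(mul1 y) -(mulVx x) -mulA H mulr1 //.
Qed.

Definition Gs := {x : W | exists u, wprod X u = x}.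

Lemma Gs_eq (a b : Gs) : sval a = sval b -> a = b.
Proof.
case: a b => [x px] [y py] /= E; subst y; congr exist; apply proof_irrelevance.
Qed.

Definition Gmul (a b : Gs) : Gs.
refine (exist _ (mul (sval a) (sval b)) _).
abstract (have [u1 h1] := proj2_sig a; have [u2 h2] := proj2_sig b; exists (u1 ++ u2); by rewrite wprod_cat h1 h2).
Defined.
Definition Gone : Gs.
refine (exist _ e _). abstract (by exists [::]).
Defined.
Definition Ginv (a : Gs) : Gs.
refine (exist _ (cinv X (sval a)) _).
abstract (have [u h] := proj2_sig a; exists (rev u); rewrite -h; apply: inv_uniq; exact: wprod_rev).
Defined.
Definition Ggen (s : S) : Gs.
refine (exist _ (cgen X s) _). abstract (exists [:: s] => /=; exact: mulr1).
Defined.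

Lemma Gs_laws : group_laws Gmul Gone Ginv.
Proof.
split=> *; apply: Gs_eq => /=; [exact: mulA|exact: mul1|exact: mulr1|exact: mulVx|exact: mulxV].
Qed.

Lemma Gs_gpow (x : Gs) n : sval (gpow Gmul Gone x n) = gpow mul e (sval x) n.
Proof. by elim: n => //= n ->. Qed.

Lemma gen_all x : exists u, wprod X u = x.
Proof.
case: HX => _ _ Hrel Hu.
have [phi0 [hom0 gen0 uniq0]] := Hu _ _ _ _ gl (cgen X) Hrel.
have relG : forall s t, m s t != 0%N -> gpow Gmul Gone (Gmul (Ggen s) (Ggen t)) (m s t) = Gone.
  by move=> s t nz; apply: Gs_eq; rewrite Gs_gpow /=; apply: Hrel.
have [phiG [homG genG _]] := Hu Gs Gmul Gone Ginv Gs_laws Ggen relG.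
have E1 := uniq0 (fun x => sval (phiG x)).
have E2 := uniq0 id.
have -> : x = sval (phiG x).
  rewrite E1.
  - exact: (E2 (fun _ _ => erefl) (fun _ => erefl)).
  - by move=> a b; rewrite homG.
  - by move=> s; rewrite genG.
by case: (phiG x).
Qed.

Lemma len_word x : has_word_of_size X x (len X x).
Proof.
rewrite /len; case: excluded_middle_informative => [pf|nE]; first by case: ex_minnP.
exfalso; apply: nE; have [u hu] := gen_all x; exists (size u); apply/existsP.
by exists (in_tuple u); rewrite hu.
Qed.

Lemma len_min x n : has_word_of_size X x n -> (len X x <= n)%N.
Proof.
rewrite /len; case: excluded_middle_informative => [pf|nE] H.
  by case: ex_minnP => k _; apply.
by exfalso; apply: nE; exists n.
Qed.

Variable sg : W -> bool.
Hypothesis homS : forall x y, sg (mul x y) = addb (sg x) (sg y).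
Hypothesis genS : forall s, sg (cgen X s) = true.

Lemma sg_e : sg e = false.
Proof. by have := homS e e; rewrite mul1; case: (sg e). Qed.

Lemma sg_wprod u : sg (wprod X u) = odd (size u).
Proof. by elim: u => [|s u IH] /=; rewrite ?sg_e // homS genS IH. Qed.

Lemma sg_len x : sg x = odd (len X x).
Proof.
have /existsP [u /eqP hu] := len_word x.
by rewrite -{1}hu sg_wprod size_tuple.
Qed.

Lemma sg_inv x : sg (cinv X x) = sg x.
Proof. have := homS x (cinv X x); rewrite mulxV sg_e. by case: (sg x); case: (sg (cinv X x)). Qed.

End Cox.

End Cox.
Import Cox.
Import GRing.Theory.

Section Hk.
Variables (S : finType) (m : S -> S -> nat) (X : coxdata S) (HX : coxeter_system X m).
Local Notation W := (cW X).
Local Notation mul := (cmul X).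
Local Notation e := (cone X).
Variable sg : W -> bool.
Hypothesis homS : forall x y, sg (mul x y) = addb (sg x) (sg y).
Hypothesis genS : forall s, sg (cgen X s) = true.
Variables (A : comNzRingType) (v : A) (H : algType A) (T : W -> H).
Hypothesis HH : hecke_algebra X v T.

Definition eps (w : W) : A := if sg w then -1 else 1.

Lemma eps_mulg w s : eps (mul w (cgen X s)) = - eps w.
Proof. by rewrite /eps homS genS; case: (sg w); rewrite /= ?opprK. Qed.

Lemma span h : exists l : seq (A * W), h = \sum_(p <- l) p.1 *: T p.2.
Proof.
case: HH => Hs _ _ _; have [l [c ->]] := Hs h.
by exists [seq (c w, w) | w <- l]; rewrite big_map.
Qed.

Definition rep h : seq (A * W) := proj1_sig (constructive_indefinite_description _ (span h)).
Lemma repE h : h = \sum_(p <- rep h) p.1 *: T p.2.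
Proof. exact: (proj2_sig (constructive_indefinite_description _ (span h))). Qed.

Lemma sum_undup (V : zmodType) (l : seq (A * W)) (F : A * W -> V) :
  \sum_(p <- l) F p = \sum_(u <- undup (map snd l)) \sum_(p <- l | p.2 == u) F p.
Proof.
under [RHS]eq_bigr do rewrite big_mkcond.
rewrite [RHS]exchange_big /=; apply: eq_big_seq => p pl; apply: esym; rewrite -big_mkcond /=.
rewrite -big_filter (@eq_filter _ _ (pred1 p.2)); last by move=> u /=; rewrite eq_sym.
rewrite filter_pred1_uniq ?undup_uniq ?big_seq1 // mem_undup; exact: map_f.
Qed.

Lemma rep0 (l : seq (A * W)) : \sum_(p <- l) p.1 *: T p.2 = 0 -> \sum_(p <- l) p.1 * eps p.2 = 0.
Proof.
move=> H0; case: HH => _ Hind _ _.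
set d := fun u => \sum_(p <- l | p.2 == u) p.1.
have Hd : forall u, u \in undup (map snd l) -> d u = 0.
  apply: Hind; first exact: undup_uniq.
  transitivity (\sum_(p <- l) p.1 *: T p.2); last exact: H0.
  rewrite (sum_undup l (fun p => p.1 *: T p.2)); apply: eq_bigr => u _.
  rewrite /d scaler_suml; apply: eq_bigr => p /eqP -> //.
rewrite (sum_undup l (fun p => p.1 * eps p.2)) big1_seq // => u /andP [_ /Hd].
rewrite -/(d u) => du.
transitivity (d u * eps u); last by rewrite du mul0r.
rewrite /d mulr_suml; apply: eq_bigr => p /eqP -> //.
Qed.

Definition f (h : H) : A := \sum_(p <- rep h) p.1 * eps p.2.

Lemma fE l : f (\sum_(p <- l) p.1 *: T p.2) = \sum_(p <- l) p.1 * eps p.2.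
Proof.
set h := \sum_(p <- l) _.
have := rep0 (l := rep h ++ [seq (- p.1, p.2) | p <- l]).
rewrite !big_cat !big_map /= -(repE h).
under eq_bigr do rewrite scaleNr.
have E : \sum_(p <- l) - p.1 * eps p.2 = - \sum_(p <- l) p.1 * eps p.2.
  by rewrite -sumrN; apply: eq_bigr => p _; rewrite mulNr.
rewrite E.
rewrite sumrN subrr => /(_ erefl) /eqP; rewrite subr_eq0 => /eqP //.
Qed.

Lemma f0 : f 0 = 0.
Proof. by have := fE [::]; rewrite !big_nil. Qed.

Lemma fD h1 h2 : f (h1 + h2) = f h1 + f h2.
Proof.
rewrite {1}(repE h1) {1}(repE h2) -big_cat fE big_cat /f //.
Qed.

Lemma fZ a h : f (a *: h) = a * f h.
Proof.
rewrite {1}(repE h) scaler_sumr.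
have := fE [seq (a * p.1, p.2) | p <- rep h]; rewrite !big_map /=.
under eq_bigr do rewrite -scalerA.
move=> ->; rewrite /f mulr_sumr; apply: eq_bigr => p _; rewrite mulrA //.
Qed.

Lemma fT w : f (T w) = eps w.
Proof. by have := fE [:: (1, w)]; rewrite !big_seq1 /= scale1r mul1r. Qed.

Lemma f_sum (I : Type) (r : seq I) (F : I -> H) : f (\sum_(i <- r) F i) = \sum_(i <- r) f (F i).
Proof. by apply: big_morph; [exact: fD | exact: f0]. Qed.

Lemma fTTs w s : f (T w * T (cgen X s)) = - eps w.
Proof.
case: HH => _ _ _ Hmul; rewrite Hmul; case: ifP => _; rewrite ?fT ?eps_mulg //.
rewrite fD !fZ !fT eps_mulg; ring.
Qed.

Lemma fTs h s : f (h * T (cgen X s)) = - f h.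
Proof.
rewrite {1}(repE h) mulr_suml f_sum.
under eq_bigr do rewrite -scalerAl fZ fTTs.
rewrite /f -sumrN; apply: eq_bigr => p _; rewrite mulrN //.
Qed.

Lemma fTw_aux n : forall w h, (len X w <= n)%N -> f (h * T w) = f h * eps w.
Proof.
elim: n => [|n IH] w h.
  rewrite leqn0 => /eqP l0.
  have := len_word HX w; rewrite l0 => /existsP [u /eqP hu].
  rewrite tuple0 /= in hu; case: HH => _ _ T1 _.
  by rewrite -hu T1 mulr1 /eps (sg_e HX homS) // mulr1.
rewrite leq_eqVlt => /orP [/eqP ln|]; last by apply: IH.
have := len_word HX w; rewrite ln => /existsP [[u su] /eqP /= hu].
move: su hu; case/lastP: u => [//|u s]; rewrite size_rcons eqSS => /eqP su.
rewrite (wprod_rcons HX) => hw.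
have lw' : (len X (wprod X u) <= n)%N.
  apply: len_min; apply/existsP; exists (Tuple (introT eqP su)); exact: eqxx.
case: HH => _ _ _ Hmul.
have : T (wprod X u) * T (cgen X s) = T w.
  by rewrite Hmul hw ln ltnS lw'.
move=> <-; rewrite mulrA fTs IH // -hw eps_mulg mulrN //.
Qed.

Lemma fTw h w : f (h * T w) = f h * eps w.
Proof. exact: (@fTw_aux (len X w)). Qed.

Lemma fM h1 h2 : f (h1 * h2) = f h1 * f h2.
Proof.
rewrite {1}(repE h2) mulr_sumr f_sum.
under eq_bigr do rewrite -scalerAr fZ fTw.
rewrite /f mulr_sumr; apply: eq_bigr => p _; ring.
Qed.

Lemma f1 : f 1 = 1.
Proof. by case: HH => _ _ T1 _; rewrite -T1 fT /eps (sg_e HX homS). Qed.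

Section Dih.
Variables (s t : S) (n : nat).
Local Notation gp k := (gpow mul e (mul (cgen X s) (cgen X t)) k).
Local Notation g := (fun y => mul y (cgen X s)).

Lemma sg_gp k : sg (gp k) = false.
Proof. elim: k => [|k IH] /=; first exact: (sg_e HX homS). by rewrite homS IH homS !genS. Qed.

Lemma gK x : g (g x) = x.
Proof. by rewrite /= -(Cox.mulA HX) (gen2 HX) (Cox.mulr1 HX). Qed.

Lemma g_inj : injective g.
Proof. by move=> a b /(congr1 g); rewrite !gK. Qed.

Lemma memD x : (x \in dihedral X s t n) =
  has (fun k => (x == gp k) || (x == mul (gp k) (cgen X s))) (iota 0 n).
Proof.
rewrite /dihedral mem_undup; apply/flatten_mapP/hasP => [[k kin]|[k kin]];
  rewrite ?inE => Hk; exists k => //; rewrite ?inE //.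
Qed.

Lemma permO : perm_eq [seq x <- dihedral X s t n | sg x]
   (map g [seq x <- dihedral X s t n | ~~ sg x]).
Proof.
apply: uniq_perm; first by rewrite filter_uniq // undup_uniq.
  by rewrite (map_inj_uniq g_inj) filter_uniq // undup_uniq.
move=> x; rewrite -{2}(gK x) (mem_map g_inj) !mem_filter homS genS.
case sx: (sg x) => //=; rewrite !memD; apply: eq_has => k /=.
have -> : (x == gp k) = false by apply/eqP => E; move: sx; rewrite E sg_gp.
have -> : (g x == mul (gp k) (cgen X s)) = false.
  by apply/eqP => E; move: (congr1 sg E); rewrite !homS sx sg_gp genS.
by rewrite /= orbF -(inj_eq g_inj) gK.
Qed.

Lemma fJ : f (J_gen X T s t n) = 0.
Proof.
rewrite /J_gen f_sum; under eq_bigr do rewrite fT.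
rewrite (bigID sg) /= -big_filter (perm_big _ permO) big_map -[X in _ + X]big_filter.
under eq_bigr do rewrite eps_mulg.
by rewrite sumrN addNr.
Qed.
End Dih.

Lemma f_inJ h : in_J X T h -> f h = 0.
Proof.
case=> l [_ ->]; rewrite f_sum big1 // => p _; rewrite !fM fJ mulr0 mul0r //.
Qed.

End Hk.


Lemma zpe_comp (A : comNzRingType) (p : {poly int}) (x : A) :
  zpoly_eval (p \Po 'X^2) x = zpoly_eval p (x * x).
Proof. by rewrite /zpoly_eval map_comp_poly horner_comp map_polyXn hornerXn expr2. Qed.

Lemma zpe_B (A : comNzRingType) (p q : {poly int}) (x : A) :
  zpoly_eval (p - q) x = zpoly_eval p x - zpoly_eval q x.
Proof. by rewrite /zpoly_eval rmorphB hornerD hornerN. Qed.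

Lemma zpe_sum (A : comNzRingType) (I : Type) (r : seq I) (F : I -> {poly int}) (x : A) :
  zpoly_eval (\sum_(i <- r) F i) x = \sum_(i <- r) zpoly_eval (F i) x.
Proof. by rewrite /zpoly_eval rmorph_sum horner_sum. Qed.

Lemma zpe_Z (A : comNzRingType) (c : int) (p : {poly int}) (x : A) :
  zpoly_eval (c *: p) x = c%:~R * zpoly_eval p x.
Proof. by rewrite /zpoly_eval map_polyZ hornerZ. Qed.

Lemma zpe_Xn (A : comNzRingType) n (x : A) : zpoly_eval 'X^n x = x ^+ n.
Proof. by rewrite /zpoly_eval map_polyXn hornerXn. Qed.

Lemma comp_X2_eq0 (p : {poly int}) : p \Po 'X^2 = 0 -> p = 0.
Proof.
move=> E; apply/eqP; rewrite -lead_coef_eq0.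
have := lead_coef_comp p (q := 'X^2); rewrite size_polyXn lead_coefXn expr1n mulr1 E lead_coef0.
by move=> <-.
Qed.

Lemma signz_r (A : comNzRingType) k : (((-1) ^+ k : int)%:~R : A) = (-1) ^+ k.
Proof. by rewrite rmorphXn rmorphN1. Qed.

Lemma bool_laws : group_laws addb false id.
Proof. by split=> [x y z|x|x|x|x]; rewrite ?addbA ?addbb // addbF. Qed.

Theorem mainTheorem17
  (S : finType) (m : S -> S -> nat) (X : coxdata S) (HX : coxeter_system X m)
  (A : comNzRingType) (v vinv : A) (HA : laurent_ring v vinv)
  (bar : {rmorphism A -> A}) (Hbar : bar v = vinv)
  (H : algType A) (T : X -> H) (HH : hecke_algebra X v T)
  (iota : {rmorphism H -> H}) (Hiota : hecke_iota X bar T iota)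
  (TL : algType A) (sigma : {lrmorphism H -> TL}) (Hsigma : TL_projection X T sigma)
  (a : X -> X -> {poly int}) (Ha : a_coeffs X v vinv (fun w => sigma (T w)) a)
  (P : X -> X -> {poly int}) (HP : KL_polys X v vinv T iota P)
  (L : X -> X -> {poly int}) (HL : L_polys X v vinv bar a L)
  (HcondP : condition_P X v vinv T sigma P L) :
  forall w : X, fc X w ->
    \sum_(x <- lowerc X w) ((-1) ^+ (len X x + len X w) : int) *: a x w = 'X^(len X w).
Proof.
move=> w fcw.
have [_ _ _ Hu] := HX.
have rel : forall s t, m s t != 0%N -> gpow addb false (addb true true) (m s t) = false.
  by move=> s t _; elim: (m s t) => //= k ->.
have [sg [homS genS _]] := Hu bool addb false id bool_laws (fun _ => true) rel.
have [Hinv _] := Ha w fcw.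
set r := (R0 in sigma (T (cinv X w)) * R0) in Hinv.
set r' : H := vinv ^+ (2 * len X w) *: \sum_(y <- lowerc X w) zpoly_eval (a y w) (v * v) *: T y.
have sr : sigma r' = r.
  rewrite /r' /r linearZ /= raddf_sum; congr (_ *: _); apply: eq_bigr => y _; exact: linearZ.
have : sigma (T (cinv X w) * r' - 1) = 0.
  rewrite rmorphB rmorphM rmorph1.
  transitivity (sigma (T (cinv X w)) * r - 1); first by congr (_ * _ - _); exact: sr.
  by rewrite Hinv subrr.
move/(proj2 Hsigma _) => HJ.
have := f_inJ HX homS genS HH HJ.
have fN : forall h, f sg HH (- h) = - f sg HH h.
  move=> h; apply/eqP; rewrite -subr_eq0 opprK -fD addNr.
  by rewrite f0.
have epsE : forall x, eps sg A x = (-1) ^+ (len X x).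
  move=> x; rewrite /eps (sg_len HX homS genS); have := signr_odd A (len X x).
  by case: (odd _) => /= <-; rewrite ?expr1 ?expr0.
rewrite fD fN (fM HX homS genS) (f1 HX homS) fT.
rewrite /r' fZ f_sum.
under eq_bigr do rewrite fZ fT epsE.
rewrite epsE.
have -> : (-1) ^+ len X (cinv X w) = (-1) ^+ len X w :> A.
  by rewrite -!epsE /eps (sg_inv HX homS).
set Sm := \sum_(i <- lowerc X w) _.
set n := len X w.
move/eqP; rewrite subr_eq0 => /eqP Hf.
have [hv _ hinj] := HA.
have key : (v * v) ^+ n * vinv ^+ (2 * n) = 1.
  rewrite exprM -exprMn.
  have -> : v * v * vinv ^+ 2 = (v * vinv) * (v * vinv) by rewrite expr2; ring.
  by rewrite hv mulr1 expr1n.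
have E : (-1) ^+ n * Sm = (v * v) ^+ n.
  transitivity ((v * v) ^+ n * ((-1) ^+ n * (vinv ^+ (2 * n) * Sm))); last by rewrite Hf mulr1.
  rewrite -[LHS]mulr1 -key; ring.
apply/eqP; rewrite -subr_eq0; apply/eqP; apply: comp_X2_eq0; apply: hinj.
rewrite zpe_comp zpe_B zpe_sum zpe_Xn -E; apply/eqP; rewrite subr_eq0; apply/eqP.
rewrite /Sm mulr_sumr; apply: eq_bigr => x _; rewrite zpe_Z signz_r exprD; ring.
Qed.
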